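(* Let $I$ be a nonempty open real interval and let $(f,g)\in\mathscr{B}_0(I)$. For $n\in\mathbb{N}$, $x=(x_1,\dots,x_n)\in I^n$ and $\lambda=(\lambda_1,\dots,\lambda_n)\in\Lambda_n$ write \[ B_{g,f}(x,\lambda):=\Big(\frac{g}{f}\Big)^{-1}\!\left(\frac{\sum_{i=1}^n\lambda_ig(x_i)}{\sum_{i=1}^n\lambda_if(x_i)}\right),\qquad A_h(x,\lambda):=h^{-1}\!\left(\frac{\sum_{i=1}^n\lambda_ih(x_i)}{\sum_{i=1}^n\lambda_i}\right), \] and $B_{g,f}(x)$, $A_h(x)$ for the case $\lambda_1=\dots=\lambda_n=1$. Consider the statements: (i) There exists a continuous strictly monotone $h:I\to\mathbb{R}$ such that $B_{g,f}(x,\lambda)=A_h(x,\lambda)$ for all $n\in\mathbb{N}$, $x\in I^n$, $\lambda\in\Lambda_n$. (ii) There exists a continuous strictly monotone $h:I\to\mathbb{R}$ such that $B_{g,f}(x)=A_h(x)$ for all $n\in\mathbb{N}$ and $x\in I^n$. (iii) There exist a continuous strictly monotone $h:I\to\mathbb{R}$ and $n\geq3$ such that $B_{g,f}(x)=A_h(x)$ for all $x\in I^n$. (iv) There exists a continuous strictly monotone $h:I\to\mathbb{R}$ such that $B_{g,f}(x,\lambda)=A_h(x,\lambda)$ for all $x\in I^2$ and $\lambda\in\Lambda_2$. (v) There exist $t\in\,]0,\frac12[\,\cup\,]\frac12,1[\,$ and a continuous strictly monotone $h:I\to\mathbb{R}$ such that $B_{g,f}(x,\lambda)=A_h(x,\lambda)$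 for all $x\in I^2$ with $\lambda=(t,1-t)$. (vi) There exist constants $a,b\in\mathbb{R}$ such that $af+bg=1$ on $I$. (vii) (Applicable when $(f,g)\in\mathscr{B}_2(I)$.) $\Psi_{f,g}=0$ on $I$. Then (i)–(vi) are equivalent, and if in addition $(f,g)\in\mathscr{B}_2(I)$, then (i)–(vii) are all equivalent.
   Context: $\Lambda_n:=\{(\lambda_1,\dots,\lambda_n)\in\mathbb{R}^n:\lambda_1,\dots,\lambda_n\geq0,\ \lambda_1+\dots+\lambda_n>0\}$. $\mathscr{B}_0(I)$ is the class of pairs $(f,g)$ of functions $I\to\mathbb{R}$ such that $f$ is everywhere positive on $I$ and $g/f$ is strictly monotone and continuous on $I$. $\mathscr{B}_2(I)$ is the class of pairs $(f,g)$ such that $f$ is everywhere positive on $I$, $f,g$ are twice continuously differentiable on $I$, and $(g/f)'$ is nowhere zero on $I$. For such pairs, $W^{i,j}_{f,g}:=f^{(i)}g^{(j)}-f^{(j)}g^{(i)}$ and $\Psi_{f,g}:=-W^{2,1}_{f,g}/W^{1,0}_{f,g}$. *)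

(* Defs.v *)
From Stdlib Require Import Reals ClassicalEpsilon.
From Coquelicot Require Import Coquelicot.
Open Scope R_scope.

Definition Ival (a b : Rbar) : R -> Prop := fun x => Rbar_lt a x /\ Rbar_lt x b.

Fixpoint sumR (n : nat) (u : nat -> R) : R :=
  match n with O => 0 | S k => sumR k u + u k end.

Definition strictly_monotone_on (I : R -> Prop) (h : R -> R) : Prop :=
  (forall x y, I x -> I y -> x < y -> h x < h y) \/
  (forall x y, I x -> I y -> x < y -> h y < h x).

Definition continuous_on_I (I : R -> Prop) (h : R -> R) : Prop :=
  forall x, I x -> continuous h x.

(* inverse of phi restricted to I: some z in I with phi z = y (unique when
   phi is strictly monotone on I and y is in the image of I). *)
Definition inv_on (I : R -> Prop) (phi : R -> R) (y : R) : R :=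
  epsilon (inhabits 0) (fun z => I z /\ phi z = y).

Definition in_In (I : R -> Prop) (n : nat) (x : nat -> R) : Prop :=
  forall i, (i < n)%nat -> I (x i).

Definition in_Lambda (n : nat) (l : nat -> R) : Prop :=
  (forall i, (i < n)%nat -> 0 <= l i) /\ 0 < sumR n l.

Definition ones : nat -> R := fun _ => 1.

Definition B0 (I : R -> Prop) (f g : R -> R) : Prop :=
  (forall x, I x -> 0 < f x) /\
  strictly_monotone_on I (fun y => g y / f y) /\
  continuous_on_I I (fun y => g y / f y).

Definition C2_on (I : R -> Prop) (f : R -> R) : Prop :=
  forall x, I x -> ex_derive f x /\ ex_derive (Derive f) x /\
                   continuous (Derive (Derive f)) x.

Definition B2 (I : R -> Prop) (f g : R -> R) : Prop :=
  (forall x, I x -> 0 < f x) /\ C2_on I f /\ C2_on I g /\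
  (forall x, I x -> Derive (fun y => g y / f y) x <> 0).

Definition Wr (f g : R -> R) (i j : nat) (x : R) : R :=
  Derive_n f i x * Derive_n g j x - Derive_n f j x * Derive_n g i x.

Definition Psi (f g : R -> R) (x : R) : R := - Wr f g 2 1 x / Wr f g 1 0 x.

Definition Bmean (I : R -> Prop) (f g : R -> R) (n : nat) (x l : nat -> R) : R :=
  inv_on I (fun y => g y / f y)
    (sumR n (fun i => l i * g (x i)) / sumR n (fun i => l i * f (x i))).

Definition Amean (I : R -> Prop) (h : R -> R) (n : nat) (x l : nat -> R) : R :=
  inv_on I h (sumR n (fun i => l i * h (x i)) / sumR n l).

Definition qa_gen (I : R -> Prop) (h : R -> R) : Prop :=
  continuous_on_I I h /\ strictly_monotone_on I h.

Definition two_weights (t : R) : nat -> R := fun i => match i with O => t | _ => 1 - t end.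

(* Main.v *)
Require Import Defs.
From Stdlib Require Import Reals.
From Coquelicot Require Import Coquelicot.
From Stdlib Require Import Lra Lia Classical ClassicalEpsilon.
Open Scope R_scope.

Lemma Ival_conv a b x y z : Ival a b x -> Ival a b y -> x <= z <= y -> Ival a b z.
Proof.
  unfold Ival; intros [H1 H2] [H3 H4] [H5 H6]; split.
  - destruct a as [r| |]; simpl in *; auto; lra.
  - destruct b as [r| |]; simpl in *; auto; lra.
Qed.

Lemma Ival_below a b x : Ival a b x -> exists y, Ival a b y /\ y < x.
Proof.
  unfold Ival; intros [H1 H2].
  destruct a as [r| |]; simpl in *.
  - exists ((r + x)/2). split; [split|]; simpl; try lra.
    destruct b as [r'| |]; simpl in *; auto; lra.
  - contradiction.
  - exists (x - 1). split; [split|]; simpl; auto; try lra.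
    destruct b as [r'| |]; simpl in *; auto; lra.
Qed.

Lemma Ival_above a b x : Ival a b x -> exists y, Ival a b y /\ x < y.
Proof.
  unfold Ival; intros [H1 H2].
  destruct b as [r| |]; simpl in *.
  - exists ((r + x)/2). split; [split|]; simpl; try lra.
    destruct a as [r'| |]; simpl in *; auto; lra.
  - exists (x + 1). split; [split|]; simpl; auto; try lra.
    destruct a as [r'| |]; simpl in *; auto; lra.
  - contradiction.
Qed.

Lemma Ival_nonempty a b : Rbar_lt a b -> exists x, Ival a b x.
Proof.
  intros H; unfold Ival.
  destruct a as [r| |]; destruct b as [r'| |]; simpl in *; try contradiction.
  - exists ((r+r')/2); simpl; lra.
  - exists (r+1); simpl; split; auto; lra.
  - exists (r'-1); simpl; split; auto; lra.
  - exists 0; simpl; auto.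
Qed.

Lemma Ival_locally a b x : Ival a b x -> locally x (Ival a b).
Proof.
  intros H. apply (open_and (fun u : R => Rbar_lt a u) (fun u : R => Rbar_lt u b)
    (open_Rbar_gt a) (open_Rbar_lt b) x H).
Qed.

Lemma IVT_loc (h : R -> R) (x y w : R) : x <= y ->
  (forall z, x <= z <= y -> continuous h z) ->
  Rmin (h x) (h y) <= w <= Rmax (h x) (h y) -> exists z, x <= z <= y /\ h z = w.
Proof.
  intros Hxy Hc Hw.
  destruct (Req_dec w (h x)) as [E|E]. { exists x; split; [lra|auto]. }
  destruct (Req_dec w (h y)) as [E'|E']. { exists y; split; [lra|auto]. }
  destruct (Req_dec x y) as [Exy|Exy]. { subst; unfold Rmin, Rmax in Hw; destruct (Rle_dec (h y) (h y)); lra. }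
  assert (Hlt : x < y) by lra.
  destruct (Rle_dec (h x) (h y)) as [Hle|Hle].
  - rewrite Rmin_left in Hw by lra; rewrite Rmax_right in Hw by lra.
    destruct (Ranalysis5.IVT_interv (fun z => h z - w) x y) as [z [Hz1 Hz2]]; auto; try lra.
    + intros c Hc'. apply continuity_pt_minus. apply continuity_pt_filterlim. apply Hc; auto.
      apply continuity_pt_const. intros u v; reflexivity.
    + exists z; split; auto; lra.
  - rewrite Rmin_right in Hw by lra; rewrite Rmax_left in Hw by lra.
    destruct (Ranalysis5.IVT_interv (fun z => w - h z) x y) as [z [Hz1 Hz2]]; auto; try lra.
    + intros c Hc'. apply continuity_pt_minus.
      apply continuity_pt_const. intros u v; reflexivity.
      apply continuity_pt_filterlim. apply Hc; auto.
    + exists z; split; auto; lra.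
Qed.

Lemma IVT_I (I : R -> Prop) (h : R -> R) x y w :
  (forall x y z, I x -> I y -> x <= z <= y -> I z) ->
  continuous_on_I I h -> I x -> I y ->
  Rmin (h x) (h y) <= w <= Rmax (h x) (h y) -> exists z, I z /\ h z = w.
Proof.
  intros Hconv Hc Hx Hy Hw.
  destruct (Rle_dec x y) as [Hxy|Hxy].
  - destruct (IVT_loc h x y w Hxy) as [z [Hz1 Hz2]]; auto.
    + intros z Hz; apply Hc; eauto.
    + exists z; split; eauto.
  - destruct (IVT_loc h y x w) as [z [Hz1 Hz2]]; try lra.
    + intros z Hz; apply Hc; eauto.
    + rewrite Rmin_comm, Rmax_comm; auto.
    + exists z; split; eauto.
Qed.

Lemma sm_inj I h x y : strictly_monotone_on I h -> I x -> I y -> h x = h y -> x = y.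
Proof.
  intros [H|H] Hx Hy E; destruct (Rtotal_order x y) as [L|[L|L]]; auto;
  [specialize (H x y Hx Hy L)|specialize (H y x Hy Hx L)|specialize (H x y Hx Hy L)|specialize (H y x Hy Hx L)]; lra.
Qed.

Lemma inv_on_spec I phi y : (exists z, I z /\ phi z = y) ->
  I (inv_on I phi y) /\ phi (inv_on I phi y) = y.
Proof. intros H. unfold inv_on. apply (epsilon_spec (inhabits 0) (fun z => I z /\ phi z = y) H). Qed.

Lemma inv_on_eq I phi y z : strictly_monotone_on I phi -> I z -> phi z = y -> inv_on I phi y = z.
Proof.
  intros Hm Hz E. destruct (inv_on_spec I phi y) as [H1 H2]. { exists z; auto. }
  apply (sm_inj I phi); auto; congruence.
Qed.

Lemma sumR_ext n u v : (forall i, (i < n)%nat -> u i = v i) -> sumR n u = sumR n v.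
Proof.
  induction n; simpl; intros H; auto.
  rewrite IHn by (intros; apply H; lia). rewrite H by lia. auto.
Qed.

Lemma sumR_scal n k u : sumR n (fun i => k * u i) = k * sumR n u.
Proof. induction n; simpl; [ring|rewrite IHn; ring]. Qed.

Lemma sumR_plus n u v : sumR n (fun i => u i + v i) = sumR n u + sumR n v.
Proof. induction n; simpl; [ring|rewrite IHn; ring]. Qed.

Lemma sumR_nonneg n u : (forall i, (i < n)%nat -> 0 <= u i) -> 0 <= sumR n u.
Proof.
  induction n; simpl; intros H; [lra|].
  assert (0 <= sumR n u) by (apply IHn; intros; apply H; lia).
  assert (0 <= u n) by (apply H; lia). lra.
Qed.

Lemma sumR_weak n l w c : (forall i, (i < n)%nat -> 0 <= l i) ->
  (forall i, (i < n)%nat -> c <= w i) ->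
  c * sumR n l <= sumR n (fun i => l i * w i).
Proof.
  induction n; simpl; intros Hl Hw; [lra|].
  assert (c * sumR n l <= sumR n (fun i => l i * w i)) by (apply IHn; [intros; apply Hl; lia|intros; apply Hw; lia]).
  assert (0 <= l n) by (apply Hl; lia). assert (c <= w n) by (apply Hw; lia). nra.
Qed.

Lemma sumR_strict n l w c : (forall i, (i < n)%nat -> 0 <= l i) ->
  (forall i, (i < n)%nat -> c < w i) -> 0 < sumR n l ->
  c * sumR n l < sumR n (fun i => l i * w i).
Proof.
  induction n; simpl; intros Hl Hw Hs; [lra|].
  assert (0 <= l n) by (apply Hl; lia). assert (c < w n) by (apply Hw; lia).
  assert (Hn : 0 <= sumR n l) by (apply sumR_nonneg; intros; apply Hl; lia).
  destruct (Rlt_dec 0 (sumR n l)).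
  - assert (c * sumR n l < sumR n (fun i => l i * w i)) by (apply IHn; [intros; apply Hl; lia|intros; apply Hw; lia|auto]).
    nra.
  - assert (c * sumR n l <= sumR n (fun i => l i * w i)) by (apply sumR_weak; [intros; apply Hl; lia|intros; apply Rlt_le, Hw; lia]).
    assert (0 < l n) by lra. nra.
Qed.

Lemma sumR_strict' n l w c : (forall i, (i < n)%nat -> 0 <= l i) ->
  (forall i, (i < n)%nat -> w i < c) -> 0 < sumR n l ->
  sumR n (fun i => l i * w i) < c * sumR n l.
Proof.
  intros Hl Hw Hs.
  pose proof (sumR_strict n l (fun i => - w i) (- c) Hl) as H.
  assert (E : sumR n (fun i => l i * - w i) = - sumR n (fun i => l i * w i)).
  { rewrite <- (Rmult_1_l (sumR n (fun i => l i * w i))).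
    replace (- (1 * sumR n (fun i => l i * w i))) with ((-1) * sumR n (fun i => l i * w i)) by ring.
    rewrite <- sumR_scal. apply sumR_ext; intros; ring. }
  cbv beta in H. rewrite E in H. assert (- c * sumR n l < - sumR n (fun i => l i * w i)).
  apply H; auto. intros i Hi; specialize (Hw i Hi); lra. lra.
Qed.

Definition convex_set (I : R -> Prop) := forall x y z, I x -> I y -> x <= z <= y -> I z.

Lemma wavg_attained I u n x L : convex_set I -> continuous_on_I I u -> in_In I n x ->
  in_Lambda n L ->
  exists z, I z /\ u z = sumR n (fun i => L i * u (x i)) / sumR n L.
Proof.
  intros Hconv Hc Hx [HL Hs].
  set (avg := sumR n (fun i => L i * u (x i)) / sumR n L).
  assert (E : sumR n (fun i => L i * u (x i)) = avg * sumR n L) by (unfold avg; field; lra).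
  assert (Hi : exists i, (i < n)%nat /\ u (x i) <= avg).
  { apply NNPP; intros C.
    assert (avg * sumR n L < sumR n (fun i => L i * u (x i))).
    { apply sumR_strict; auto. intros i Hi0. apply Rnot_le_lt. intros Hle. apply C; eauto. }
    lra. }
  assert (Hj : exists j, (j < n)%nat /\ avg <= u (x j)).
  { apply NNPP; intros C.
    assert (sumR n (fun i => L i * u (x i)) < avg * sumR n L).
    { apply sumR_strict'; auto. intros i Hi0. apply Rnot_le_lt. intros Hle. apply C; eauto. }
    lra. }
  destruct Hi as [i [Hi1 Hi2]]; destruct Hj as [j [Hj1 Hj2]].
  apply (IVT_I I u (x i) (x j) avg); auto.
  split; [apply Rle_trans with (u (x i)); [apply Rmin_l|auto]
         |apply Rle_trans with (u (x j)); [auto|apply Rmax_r]].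
Qed.

Lemma Ival_convex a b : convex_set (Ival a b).
Proof. intros x y z; apply Ival_conv. Qed.

Lemma cont_affine (phi : R -> R) c d x : continuous phi x -> continuous (fun y => c + d * phi y) x.
Proof.
  intros H. apply continuity_pt_filterlim.
  apply continuity_pt_plus. apply continuity_pt_const; intros u v; auto.
  apply continuity_pt_mult. apply continuity_pt_const; intros u v; auto.
  apply continuity_pt_filterlim; auto.
Qed.

Lemma sm_affine I phi c d : d <> 0 -> strictly_monotone_on I phi ->
  strictly_monotone_on I (fun y => c + d * phi y).
Proof.
  intros Hd [H|H]; destruct (Rlt_dec 0 d) as [Hp|Hp].
  - left; intros x y Hx Hy L; specialize (H x y Hx Hy L); nra.
  - right; intros x y Hx Hy L; specialize (H x y Hx Hy L).
    assert (d < 0) by lra. nra.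
  - right; intros x y Hx Hy L; specialize (H x y Hx Hy L); nra.
  - left; intros x y Hx Hy L; specialize (H x y Hx Hy L).
    assert (d < 0) by lra. nra.
Qed.

Lemma sm_inv I k : (forall x, I x -> 0 < k x) -> strictly_monotone_on I k ->
  strictly_monotone_on I (fun y => / k y).
Proof.
  intros Hp [H|H].
  - right; intros x y Hx Hy L. apply Rinv_lt_contravar; auto.
    apply Rmult_lt_0_compat; auto.
  - left; intros x y Hx Hy L. apply Rinv_lt_contravar; auto.
    apply Rmult_lt_0_compat; auto.
Qed.

Lemma S6_S1 I f g : convex_set I -> B0 I f g ->
  (exists c d : R, forall x, I x -> c * f x + d * g x = 1) ->
  exists h, qa_gen I h /\
      forall (n : nat) (x l : nat -> R), (1 <= n)%nat -> in_In I n x -> in_Lambda n l ->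
        Bmean I f g n x l = Amean I h n x l.
Proof.
  intros Hconv [Hf [Hsm Hcont]] [c [d Hcd]].
  set (phi := fun y => g y / f y) in *.
  destruct (Req_dec d 0) as [Hd|Hd].
  - subst d. exists phi. split; [split; auto|].
    intros n x l Hn Hx [Hl Hs].
    assert (Hc : c <> 0). { intros E; specialize (Hcd (x 0%nat) (Hx 0%nat ltac:(lia))). subst c; lra. }
    unfold Bmean, Amean. f_equal.
    assert (E1 : sumR n (fun i => l i * f (x i)) = / c * sumR n l).
    { rewrite <- sumR_scal. apply sumR_ext. intros i Hi. specialize (Hcd (x i) (Hx i Hi)).
      replace (f (x i)) with (/ c). ring. field_simplify_eq; auto. nra. }
    assert (E2 : sumR n (fun i => l i * phi (x i)) = c * sumR n (fun i => l i * g (x i))).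
    { rewrite <- sumR_scal. apply sumR_ext. intros i Hi. specialize (Hcd (x i) (Hx i Hi)).
      specialize (Hf (x i) (Hx i Hi)).
      assert (Ei : / f (x i) = c). { apply (Rmult_eq_reg_r (f (x i))); [|lra]. rewrite Rinv_l by lra. lra. }
      unfold phi, Rdiv. rewrite Ei. ring. }
    rewrite E1, E2. field. lra.
  - set (h := fun y => / (c + d * phi y)).
    assert (Hk : forall y, I y -> c + d * phi y = / f y).
    { intros y Hy. specialize (Hcd y Hy). specialize (Hf y Hy). unfold phi.
      field_simplify_eq; lra. }
    assert (Hhf : forall y, I y -> h y = f y).
    { intros y Hy. unfold h. rewrite Hk by auto. rewrite Rinv_inv; auto. }
    assert (Hkp : forall y, I y -> 0 < c + d * phi y).
    { intros y Hy. rewrite Hk by auto. apply Rinv_0_lt_compat; auto. }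
    assert (Hhc : continuous_on_I I h).
    { intros y Hy. unfold h. apply continuous_Rinv_comp.
      apply cont_affine. apply Hcont; auto. specialize (Hkp y Hy); lra. }
    exists h. split. split; auto.
    apply (sm_inv I (fun y => c + d * phi y)); auto. apply sm_affine; auto.
    intros n x l Hn Hx Hl.
    pose proof Hl as [Hl0 Hs].
    destruct (wavg_attained I h n x l Hconv Hhc Hx Hl) as [z [Hz Hhz]].
    unfold Amean. set (z' := inv_on I h _).
    assert (Ez : z' = z). { apply inv_on_eq; auto. apply (sm_inv I (fun y => c + d * phi y)); auto. apply sm_affine; auto. }
    rewrite Ez. unfold Bmean. apply inv_on_eq; auto.
    set (U := sumR n (fun i => l i * f (x i))).
    set (W := sumR n (fun i => l i * g (x i))).
    set (L := sumR n l).
    assert (HU : 0 * L < U).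
    { apply sumR_strict; auto. }
    assert (EU : sumR n (fun i => l i * h (x i)) = U).
    { apply sumR_ext. intros i Hi. rewrite Hhf; auto. }
    assert (Elin : c * U + d * W = L).
    { unfold U, W, L. rewrite <- !sumR_scal, <- sumR_plus. apply sumR_ext.
      intros i Hi. pose proof (Hcd (x i) (Hx i Hi)) as Hcd0. transitivity (l i * (c * f (x i) + d * g (x i))); [ring|rewrite Hcd0; ring]. }
    rewrite EU in Hhz. fold L in Hhz. unfold h in Hhz.
    assert (Hz2 : c + d * phi z = L / U).
    { rewrite <- (Rinv_inv (c + d * phi z)). rewrite Hhz. rewrite Rinv_div. reflexivity. }
    change (phi z = W / U). apply (Rmult_eq_reg_l d); auto.
    replace (d * (W / U)) with (L / U - c) by (field_simplify_eq; lra).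
    lra.
Qed.

Lemma sumR_ones n : sumR n ones = INR n.
Proof. induction n; simpl sumR; [simpl; ring|rewrite IHn, S_INR; unfold ones; ring]. Qed.

Lemma lambda_ones n : (1 <= n)%nat -> in_Lambda n ones.
Proof.
  intros Hn; split. intros; unfold ones; lra. rewrite sumR_ones. apply lt_0_INR; lia.
Qed.

Lemma S1_S2 I f g :
  (exists h, qa_gen I h /\
      forall (n : nat) (x l : nat -> R), (1 <= n)%nat -> in_In I n x -> in_Lambda n l ->
        Bmean I f g n x l = Amean I h n x l) ->
  exists h, qa_gen I h /\
      forall (n : nat) (x : nat -> R), (1 <= n)%nat -> in_In I n x ->
        Bmean I f g n x ones = Amean I h n x ones.
Proof.
  intros [h [Hh H]]; exists h; split; auto. intros n x Hn Hx; apply H; auto. apply lambda_ones; auto.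
Qed.

Lemma S2_S3 I f g :
  (exists h, qa_gen I h /\
      forall (n : nat) (x : nat -> R), (1 <= n)%nat -> in_In I n x ->
        Bmean I f g n x ones = Amean I h n x ones) ->
  exists h (n : nat), qa_gen I h /\ (3 <= n)%nat /\
      forall x : nat -> R, in_In I n x -> Bmean I f g n x ones = Amean I h n x ones.
Proof.
  intros [h [Hh H]]; exists h, 3%nat; split; [auto|split; [auto|]]. intros x Hx; apply H; auto.
Qed.

Lemma S1_S4 I f g :
  (exists h, qa_gen I h /\
      forall (n : nat) (x l : nat -> R), (1 <= n)%nat -> in_In I n x -> in_Lambda n l ->
        Bmean I f g n x l = Amean I h n x l) ->
  exists h, qa_gen I h /\
      forall x l : nat -> R, in_In I 2 x -> in_Lambda 2 l ->
        Bmean I f g 2 x l = Amean I h 2 x l.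
Proof.
  intros [h [Hh H]]; exists h; split; [auto|]. intros x l Hx Hl; apply H; auto.
Qed.

Lemma lambda_two t : 0 < t < 1 -> in_Lambda 2 (two_weights t).
Proof.
  intros Ht; split.
  - intros i Hi. destruct i as [|[|i]]; simpl; lra.
  - simpl. lra.
Qed.

Lemma S4_S5 I f g :
  (exists h, qa_gen I h /\
      forall x l : nat -> R, in_In I 2 x -> in_Lambda 2 l ->
        Bmean I f g 2 x l = Amean I h 2 x l) ->
  exists t h, ((0 < t < 1/2) \/ (1/2 < t < 1)) /\ qa_gen I h /\
      forall x : nat -> R, in_In I 2 x ->
        Bmean I f g 2 x (two_weights t) = Amean I h 2 x (two_weights t).
Proof.
  intros [h [Hh H]]; exists (1/4), h; split; [left; lra|split; auto].
  intros x Hx; apply H; auto. apply lambda_two; lra.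
Qed.

Definition ext2 (x : nat -> R) : nat -> R := fun i => match i with O => x O | _ => x 1%nat end.

Lemma sum_ext2 k x (u : R -> R) :
  sumR (S k) (fun i => ones i * u (ext2 x i)) = u (x O) + INR k * u (x 1%nat).
Proof.
  induction k.
  - simpl. unfold ones. ring.
  - change (sumR (S (S k)) (fun i => ones i * u (ext2 x i))) with
      (sumR (S k) (fun i => ones i * u (ext2 x i)) + ones (S k) * u (ext2 x (S k))).
    rewrite IHk, S_INR. unfold ones; simpl. ring.
Qed.

Lemma S3_S5 I f g : (forall x, I x -> 0 < f x) ->
  (exists h (n : nat), qa_gen I h /\ (3 <= n)%nat /\
      forall x : nat -> R, in_In I n x -> Bmean I f g n x ones = Amean I h n x ones) ->
  exists t h, ((0 < t < 1/2) \/ (1/2 < t < 1)) /\ qa_gen I h /\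
      forall x : nat -> R, in_In I 2 x ->
        Bmean I f g 2 x (two_weights t) = Amean I h 2 x (two_weights t).
Proof.
  intros Hf [h [n [Hh [Hn H]]]].
  destruct n as [|k]; [lia|].
  assert (Hk : 2 <= INR k) by (replace 2 with (INR 2) by (simpl; ring); apply le_INR; lia).
  exists (1 / (INR k + 1)), h. split.
  { left. split. apply Rdiv_lt_0_compat; lra.
    apply (Rmult_lt_reg_r (INR k + 1)); [lra|]. field_simplify; lra. }
  split; auto.
  intros x Hx.
  assert (Hy : in_In I (S k) (ext2 x)).
  { intros i Hi. destruct i; simpl; apply Hx; lia. }
  specialize (H _ Hy).
  unfold Bmean, Amean in *.
  rewrite !sum_ext2, sumR_ones, S_INR in H.
  assert (Hf0 := Hf (x O) (Hx O ltac:(lia))).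
  assert (Hf1 := Hf (x 1%nat) (Hx 1%nat ltac:(lia))).
  simpl sumR. unfold two_weights.
  match goal with |- inv_on _ _ ?A = inv_on _ _ ?B =>
    replace A with ((g (x O) + INR k * g (x 1%nat)) / (f (x O) + INR k * f (x 1%nat)));
    [replace B with ((h (x O) + INR k * h (x 1%nat)) / (INR k + 1))|] end.
  - exact H.
  - field. lra.
  - field. split; [lra|]. nra.
Qed.

Lemma kappa_alg t s pu qu pv qv pm qm pm' qm' pw qw pw' qw' :
  0 < t -> 0 < s -> t + s = 1 -> t <> s -> pu * qv - qu * pv <> 0 ->
  0 < pu -> 0 < pv -> 0 < pm -> 0 < pm' -> pw <> 0 -> pw' <> 0 ->
  qm * (t * pu + s * pv) = pm * (t * qu + s * qv) ->
  qm' * (t * pv + s * pu) = pm' * (t * qv + s * qu) ->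
  qw * (t * pm + s * pu) = pw * (t * qm + s * qu) ->
  qw * (t * pu + s * pm') = pw * (t * qu + s * qm') ->
  qw' * (t * pm' + s * pv) = pw' * (t * qm' + s * qv) ->
  qw' * (t * pv + s * pm) = pw' * (t * qv + s * qm) ->
  pm = t * pu + s * pv /\ qm = t * qu + s * qv.
Proof.
  intros Ht Hs Hts Hne HD Hpu Hpv Hpm Hpm' Hpw Hpw' E1 E2 E3a E3b E4a E4b.
  set (T := t * pu + s * pv). set (T' := t * pv + s * pu).
  assert (HT : 0 < T) by (unfold T; nra). assert (HT' : 0 < T') by (unfold T'; nra).
  set (k := pm / T). set (k' := pm' / T').
  assert (Epm : pm = k * T) by (unfold k; field; lra).
  assert (Epm' : pm' = k' * T') by (unfold k'; field; lra).
  assert (Eqm : qm = k * (t * qu + s * qv)).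
  { apply (Rmult_eq_reg_r T); [|lra]. fold T in E1. rewrite E1, Epm. ring. }
  assert (Eqm' : qm' = k' * (t * qv + s * qu)).
  { apply (Rmult_eq_reg_r T'); [|lra]. fold T' in E2. rewrite E2, Epm'. ring. }
  assert (Hk : 0 < k) by (unfold k; apply Rdiv_lt_0_compat; lra).
  assert (Hk' : 0 < k') by (unfold k'; apply Rdiv_lt_0_compat; lra).
  assert (B1 : (t * pm + s * pu) * (t * qu + s * qm') - (t * qm + s * qu) * (t * pu + s * pm') = 0).
  { apply (Rmult_eq_reg_l pw); auto.
    transitivity (qw * (t * pu + s * pm') * (t * pm + s * pu) - qw * (t * pm + s * pu) * (t * pu + s * pm')).
    - rewrite E3a, E3b. ring.
    - ring. }
  assert (B2 : (t * pm' + s * pv) * (t * qv + s * qm) - (t * qm' + s * qv) * (t * pv + s * pm) = 0).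
  { apply (Rmult_eq_reg_l pw'); auto.
    transitivity (qw' * (t * pv + s * pm) * (t * pm' + s * pv) - qw' * (t * pm' + s * pv) * (t * pv + s * pm)).
    - rewrite E4a, E4b. ring.
    - ring. }
  rewrite Epm, Epm', Eqm, Eqm' in B1, B2. unfold T, T' in B1, B2.
  replace s with (1 - t) in B1, B2 by lra.
  assert (F1 : (1 - t) * t * (pu * qv - qu * pv) * ((1 - t) * k' - t * k - ((1-t)*(1-t) - t * t) * k * k') = 0).
  { rewrite <- B1. ring. }
  assert (F2 : (1 - t) * t * (pu * qv - qu * pv) * (t * k' - (1-t) * k + ((1-t)*(1-t) - t * t) * k * k') = 0).
  { rewrite <- B2. ring. }
  assert (Hc : (1 - t) * t * (pu * qv - qu * pv) <> 0).
  { apply Rmult_integral_contrapositive_currified; auto.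
    apply Rmult_integral_contrapositive_currified; lra. }
  apply Rmult_integral in F1; destruct F1 as [F1|F1]; [contradiction|].
  apply Rmult_integral in F2; destruct F2 as [F2|F2]; [contradiction|].
  assert (Ekk : k' = k) by lra.
  rewrite Ekk in F1.
  assert (Hk1 : (1 - 2 * t) * k * (1 - k) = 0) by (rewrite <- F1; ring).
  assert (Hk1' : k = 1).
  { apply Rmult_integral in Hk1; destruct Hk1 as [H1|H1]; [|lra].
    apply Rmult_integral in H1; destruct H1 as [H1|H1]; lra. }
  split; [rewrite Epm, Hk1' | rewrite Eqm, Hk1']; unfold T; ring.
Qed.

Definition tJ (J : R -> Prop) (Q : R -> R) (t : R) :=
  forall u v, J u -> J v -> Q (t * u + (1 - t) * v) = t * Q u + (1 - t) * Q v.

Definition cerr (Q : R -> R) (a b x : R) := Q x - (Q a * (b - x) + Q b * (x - a)) / (b - a).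

Lemma cerr_tJ J Q t a b : a < b -> tJ J Q t -> tJ J (cerr Q a b) t.
Proof.
  intros Hab H u v Hu Hv. unfold cerr. rewrite H by auto. field. lra.
Qed.

Lemma cerr_a Q a b : a < b -> cerr Q a b a = 0.
Proof. intros; unfold cerr; field; lra. Qed.
Lemma cerr_b Q a b : a < b -> cerr Q a b b = 0.
Proof. intros; unfold cerr; field; lra. Qed.

Lemma step_lemma J Q t a b : convex_set J -> 0 < t < 1 -> tJ J Q t -> J a -> J b -> a < b ->
  forall x, a <= x <= b -> exists z, a <= z <= b /\
    (cerr Q a b x = (1 - t) * cerr Q a b z \/ cerr Q a b x = t * cerr Q a b z).
Proof.
  intros Hc Ht HQ Ha Hb Hab x Hx.
  pose proof (cerr_tJ J Q t a b Hab HQ) as He.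
  destruct (Rle_dec x (t * a + (1 - t) * b)) as [Hle|Hle].
  - set (z := (x - t * a) / (1 - t)).
    assert (Hz : a <= z <= b).
    { unfold z; split; [apply (Rmult_le_reg_r (1 - t)); [lra|]; field_simplify; lra
                       |apply (Rmult_le_reg_r (1 - t)); [lra|]; field_simplify; lra]. }
    exists z; split; auto. left.
    assert (Ex : x = t * a + (1 - t) * z) by (unfold z; field; lra).
    rewrite Ex at 1. rewrite He; [rewrite cerr_a; [ring|lra]|auto|].
    apply (Hc a b z); auto.
  - set (z := (x - (1 - t) * b) / t).
    assert (Hz : a <= z <= b).
    { unfold z; split; [apply (Rmult_le_reg_r t); [lra|]; field_simplify; lra
                       |apply (Rmult_le_reg_r t); [lra|]; field_simplify; lra]. }
    exists z; split; auto. right.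
    assert (Ex : x = t * z + (1 - t) * b) by (unfold z; field; lra).
    rewrite Ex at 1. rewrite He; [rewrite cerr_b; [ring|lra]|apply (Hc a b z); auto|auto].
Qed.

Lemma chord_bound qa qb a b z : a < b -> a <= z <= b ->
  Rabs ((qa * (b - z) + qb * (z - a)) / (b - a)) <= Rabs qa + Rabs qb.
Proof.
  intros Hab Hz. unfold Rdiv. rewrite Rabs_mult, Rabs_inv, (Rabs_right (b - a)) by lra.
  apply (Rmult_le_reg_r (b - a)); [lra|]. rewrite Rmult_assoc, Rinv_l, Rmult_1_r by lra.
  eapply Rle_trans; [apply Rabs_triang|]. rewrite !Rabs_mult, (Rabs_right (b - z)), (Rabs_right (z - a)) by lra.
  pose proof (Rabs_pos qa); pose proof (Rabs_pos qb). nra.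
Qed.

Lemma pow_big K B : 1 < K -> exists n, B < K ^ n.
Proof.
  intros HK. destruct (Pow_x_infinity K) with (b := B + 1) as [N HN].
  { rewrite Rabs_right; lra. }
  exists N. specialize (HN N (le_n N)). rewrite Rabs_right in HN. lra.
  apply Rle_ge, pow_le; lra.
Qed.

Definition Kc t := Rmin (/ (1 - t)) (/ t).

Lemma Kc_facts t : 0 < t < 1 -> 1 < Kc t /\ Kc t <= / (1 - t) /\ Kc t <= / t.
Proof.
  intros Ht. unfold Kc. split; [|split; [apply Rmin_l|apply Rmin_r]].
  apply Rmin_glb_lt.
  - rewrite <- Rinv_1. apply Rinv_lt_contravar; lra.
  - rewrite <- Rinv_1. apply Rinv_lt_contravar; lra.
Qed.

Lemma iter_neg J Q t a b : convex_set J -> 0 < t < 1 -> tJ J Q t -> J a -> J b -> a < b ->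
  forall x0, a <= x0 <= b -> cerr Q a b x0 < 0 ->
  forall n, exists z, a <= z <= b /\ cerr Q a b z <= Kc t ^ n * cerr Q a b x0.
Proof.
  intros Hc Ht HQ Ha Hb Hab x0 Hx0 Hneg n.
  destruct (Kc_facts t Ht) as [K1 [K2 K3]].
  induction n as [|n IH].
  - exists x0; split; auto; simpl; lra.
  - destruct IH as [z [Hz Hez]].
    assert (Hp : 0 < Kc t ^ n) by (apply pow_lt; lra).
    assert (Hzn : cerr Q a b z < 0) by nra.
    destruct (step_lemma J Q t a b Hc Ht HQ Ha Hb Hab z Hz) as [z' [Hz' [E|E]]].
    + exists z'; split; auto. simpl.
      assert (E' : cerr Q a b z' = / (1 - t) * cerr Q a b z) by (rewrite E; field; lra).
      rewrite E'. assert (0 <= / (1 - t) - Kc t) by lra. nra.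
    + exists z'; split; auto. simpl.
      assert (E' : cerr Q a b z' = / t * cerr Q a b z) by (rewrite E; field; lra).
      rewrite E'. assert (0 <= / t - Kc t) by lra. nra.
Qed.

Lemma iter_pos J Q t a b : convex_set J -> 0 < t < 1 -> tJ J Q t -> J a -> J b -> a < b ->
  forall x0, a <= x0 <= b -> 0 < cerr Q a b x0 ->
  forall n, exists z, a <= z <= b /\ Kc t ^ n * cerr Q a b x0 <= cerr Q a b z.
Proof.
  intros Hc Ht HQ Ha Hb Hab x0 Hx0 Hneg n.
  destruct (Kc_facts t Ht) as [K1 [K2 K3]].
  induction n as [|n IH].
  - exists x0; split; auto; simpl; lra.
  - destruct IH as [z [Hz Hez]].
    assert (Hp : 0 < Kc t ^ n) by (apply pow_lt; lra).
    assert (Hzn : 0 < cerr Q a b z) by nra.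
    destruct (step_lemma J Q t a b Hc Ht HQ Ha Hb Hab z Hz) as [z' [Hz' [E|E]]].
    + exists z'; split; auto. simpl.
      assert (E' : cerr Q a b z' = / (1 - t) * cerr Q a b z) by (rewrite E; field; lra).
      rewrite E'. assert (0 <= / (1 - t) - Kc t) by lra. nra.
    + exists z'; split; auto. simpl.
      assert (E' : cerr Q a b z' = / t * cerr Q a b z) by (rewrite E; field; lra).
      rewrite E'. assert (0 <= / t - Kc t) by lra. nra.
Qed.

Lemma tJ_lower J Q t a b : convex_set J -> 0 < t < 1 -> tJ J Q t -> J a -> J b -> a < b ->
  (forall x, a <= x <= b -> 0 < Q x) ->
  forall x, a <= x <= b -> Q a * (b - x) + Q b * (x - a) <= Q x * (b - a).
Proof.
  intros Hc Ht HQ Ha Hb Hab Hpos x Hx.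
  apply Rnot_lt_le; intros Hlt.
  assert (Hneg : cerr Q a b x < 0).
  { unfold cerr. apply Rlt_minus. apply (Rmult_lt_reg_r (b - a)); [lra|].
    replace ((Q a * (b - x) + Q b * (x - a)) / (b - a) * (b - a)) with (Q a * (b - x) + Q b * (x - a)) by (field; lra).
    lra. }
  set (B := Rabs (Q a) + Rabs (Q b)).
  destruct (Kc_facts t Ht) as [K1 _].
  destruct (pow_big (Kc t) (B / (- cerr Q a b x)) K1) as [n Hn].
  destruct (iter_neg J Q t a b Hc Ht HQ Ha Hb Hab x Hx Hneg n) as [z [Hz Hez]].
  assert (Hb1 : Kc t ^ n * cerr Q a b x < - B).
  { apply (Rmult_lt_reg_r (/ (- cerr Q a b x))). apply Rinv_0_lt_compat; lra.
    replace (Kc t ^ n * cerr Q a b x * / - cerr Q a b x) with (- Kc t ^ n) by (field; lra).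
    replace (- B * / - cerr Q a b x) with (- (B * / - cerr Q a b x)) by ring.
    unfold Rdiv in Hn. lra. }
  pose proof (chord_bound (Q a) (Q b) a b z Hab Hz) as Hcb.
  pose proof (Rle_abs ((Q a * (b - z) + Q b * (z - a)) / (b - a))).
  pose proof (Hpos z Hz).
  assert (Ez : cerr Q a b z = Q z - (Q a * (b - z) + Q b * (z - a)) / (b - a)) by reflexivity.
  fold B in Hcb. lra.
Qed.

Lemma tJ_upper J Q t a b c : convex_set J -> 0 < t < 1 -> tJ J Q t -> J a -> J b -> J c -> a < b -> c < a ->
  (forall x, c <= x <= b -> 0 < Q x) ->
  forall x, a <= x <= b -> Q x * (b - a) <= Q a * (b - x) + Q b * (x - a).
Proof.
  intros Hc Ht HQ Ha Hb Hcc Hab Hca Hpos x Hx.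
  apply Rnot_lt_le; intros Hlt.
  assert (Hp : 0 < cerr Q a b x).
  { unfold cerr. apply Rgt_minus. apply (Rmult_lt_reg_r (b - a)); [lra|].
    replace ((Q a * (b - x) + Q b * (x - a)) / (b - a) * (b - a)) with (Q a * (b - x) + Q b * (x - a)) by (field; lra).
    lra. }
  set (U := (Rabs (Q a) + Rabs (Q c)) * (b - c) / (a - c)).
  assert (HU : forall z, a <= z <= b -> Q z <= U).
  { intros z Hz.
    assert (Jz : J z) by (apply (Hc a b z); auto).
    pose proof (tJ_lower J Q t c z Hc Ht HQ Hcc Jz ltac:(lra)) as HL.
    assert (HL' : Q c * (z - a) + Q z * (a - c) <= Q a * (z - c)).
    { apply HL. intros y Hy; apply Hpos; lra. lra. }
    unfold U. apply (Rmult_le_reg_r (a - c)); [lra|].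
    unfold Rdiv. rewrite Rmult_assoc, Rinv_l, Rmult_1_r by lra.
    pose proof (Rle_abs (Q a)); pose proof (Rle_abs (- Q c)); rewrite Rabs_Ropp in *.
    pose proof (Rabs_pos (Q a)); pose proof (Rabs_pos (Q c)).
    assert (Q a * (z - c) <= Rabs (Q a) * (b - c)) by nra.
    assert (- Q c * (z - a) <= Rabs (Q c) * (b - c)) by nra.
    lra. }
  set (B := U + Rabs (Q a) + Rabs (Q b)).
  destruct (Kc_facts t Ht) as [K1 _].
  destruct (pow_big (Kc t) (B / cerr Q a b x) K1) as [n Hn].
  destruct (iter_pos J Q t a b Hc Ht HQ Ha Hb Hab x Hx Hp n) as [z [Hz Hez]].
  assert (Hb1 : B < Kc t ^ n * cerr Q a b x).
  { apply (Rmult_lt_reg_r (/ cerr Q a b x)). apply Rinv_0_lt_compat; lra.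
    replace (Kc t ^ n * cerr Q a b x * / cerr Q a b x) with (Kc t ^ n) by (field; lra).
    unfold Rdiv in Hn. lra. }
  pose proof (chord_bound (Q a) (Q b) a b z Hab Hz) as Hcb.
  pose proof (Rle_abs (- ((Q a * (b - z) + Q b * (z - a)) / (b - a)))). rewrite Rabs_Ropp in *.
  pose proof (HU z Hz).
  assert (Ez : cerr Q a b z = Q z - (Q a * (b - z) + Q b * (z - a)) / (b - a)) by reflexivity.
  unfold B in Hb1. lra.
Qed.

Lemma tJ_affine J Q t a b c : convex_set J -> 0 < t < 1 -> tJ J Q t -> J a -> J b -> J c -> a < b -> c < a ->
  (forall x, c <= x <= b -> 0 < Q x) ->
  forall x, a <= x <= b -> Q x * (b - a) = Q a * (b - x) + Q b * (x - a).
Proof.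
  intros. apply Rle_antisym.
  - eapply tJ_upper; eauto.
  - eapply tJ_lower; eauto. intros; apply H7; lra.
Qed.

Definition Jset (I : R -> Prop) (h : R -> R) (u : R) := exists x, I x /\ h x = u.

Lemma X_spec a b h u : Jset (Ival a b) h u -> Ival a b (inv_on (Ival a b) h u) /\ h (inv_on (Ival a b) h u) = u.
Proof. intros H. apply inv_on_spec; auto. Qed.

Lemma X_h a b h : strictly_monotone_on (Ival a b) h -> forall x, Ival a b x -> inv_on (Ival a b) h (h x) = x.
Proof. intros Hhm x Hx. apply inv_on_eq; auto. Qed.

Lemma J_convex a b h : continuous_on_I (Ival a b) h -> convex_set (Jset (Ival a b) h).
Proof.
  intros Hhc x y z Hx Hy Hz.
  destruct (X_spec a b h x Hx) as [Ix Ex]; destruct (X_spec a b h y Hy) as [Iy Ey].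
  destruct (IVT_I (Ival a b) h _ _ z (Ival_convex a b) Hhc Ix Iy) as [w [Iw Ew]].
  { rewrite Ex, Ey. split; [apply Rle_trans with x; [apply Rmin_l|lra]
                            |apply Rle_trans with y; [lra|apply Rmax_r]]. }
  exists w; auto.
Qed.

Lemma J_comb a b h : continuous_on_I (Ival a b) h -> forall u v l,
  Jset (Ival a b) h u -> Jset (Ival a b) h v -> 0 <= l <= 1 -> Jset (Ival a b) h (l * u + (1 - l) * v).
Proof.
  intros Hhc u v l Hu Hv Hl. destruct (Rle_dec u v).
  - apply (J_convex a b h Hhc u v); auto; split; nra.
  - apply (J_convex a b h Hhc v u); auto; split; nra.
Qed.

Lemma J_below a b h : strictly_monotone_on (Ival a b) h -> forall u,
  Jset (Ival a b) h u -> exists c, Jset (Ival a b) h c /\ c < u.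
Proof.
  intros Hhm u Hu. destruct (X_spec a b h u Hu) as [Ix Ex].
  destruct Hhm as [Hm|Hm].
  - destruct (Ival_below a b _ Ix) as [y [Iy Hy]].
    exists (h y); split; [exists y; auto|]. rewrite <- Ex; apply Hm; auto.
  - destruct (Ival_above a b _ Ix) as [y [Iy Hy]].
    exists (h y); split; [exists y; auto|]. rewrite <- Ex; apply Hm; auto.
Qed.

Lemma J_above a b h : strictly_monotone_on (Ival a b) h -> forall u,
  Jset (Ival a b) h u -> exists c, Jset (Ival a b) h c /\ u < c.
Proof.
  intros Hhm u Hu. destruct (X_spec a b h u Hu) as [Ix Ex].
  destruct Hhm as [Hm|Hm].
  - destruct (Ival_above a b _ Ix) as [y [Iy Hy]].
    exists (h y); split; [exists y; auto|]. rewrite <- Ex; apply Hm; auto.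
  - destruct (Ival_below a b _ Ix) as [y [Iy Hy]].
    exists (h y); split; [exists y; auto|]. rewrite <- Ex; apply Hm; auto.
Qed.

Lemma X_sm a b h : strictly_monotone_on (Ival a b) h ->
  strictly_monotone_on (Jset (Ival a b) h) (inv_on (Ival a b) h).
Proof.
  intros Hhm.
  destruct Hhm as [Hm|Hm]; [left|right]; intros w1 w2 H1 H2 L;
  destruct (X_spec a b h w1 H1) as [I1 E1]; destruct (X_spec a b h w2 H2) as [I2 E2];
  destruct (Rtotal_order (inv_on (Ival a b) h w1) (inv_on (Ival a b) h w2)) as [T|[T|T]]; auto.
  - rewrite <- E1, <- E2, T in L; lra.
  - specialize (Hm _ _ I2 I1 T); lra.
  - specialize (Hm _ _ I1 I2 T); lra.
  - rewrite <- E1, <- E2, T in L; lra.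
Qed.

Lemma sm_comp J I1 (F G : R -> R) : (forall u, J u -> I1 (F u)) ->
  strictly_monotone_on J F -> strictly_monotone_on I1 G -> strictly_monotone_on J (fun u => G (F u)).
Proof.
  intros HI [HF|HF] [HG|HG]; [left|right|right|left]; intros x y Hx Hy L;
  first [apply HG | idtac]; try apply HG; auto; try apply HF; auto.
  all: try (specialize (HF x y Hx Hy L); specialize (HG _ _ (HI x Hx) (HI y Hy) HF); lra).
  all: try (specialize (HF x y Hx Hy L); specialize (HG _ _ (HI y Hy) (HI x Hx) HF); lra).
Qed.

Lemma sm_between J (F : R -> R) w1 w w2 : J w1 -> J w -> J w2 -> w1 <= w <= w2 ->
  strictly_monotone_on J F -> Rabs (F w) <= Rabs (F w1) + Rabs (F w2).
Proof.
  intros H1 H H2 Hw [HF|HF].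
  - assert (F w1 <= F w). { destruct (Req_dec w1 w); [subst; lra|apply Rlt_le, HF; auto; lra]. }
    assert (F w <= F w2). { destruct (Req_dec w w2); [subst; lra|apply Rlt_le, HF; auto; lra]. }
    unfold Rabs; repeat destruct Rcase_abs; lra.
  - assert (F w <= F w1). { destruct (Req_dec w1 w); [subst; lra|apply Rlt_le, HF; auto; lra]. }
    assert (F w2 <= F w). { destruct (Req_dec w w2); [subst; lra|apply Rlt_le, HF; auto; lra]. }
    unfold Rabs; repeat destruct Rcase_abs; lra.
Qed.

Lemma key_eq a b f g t h : B0 (Ival a b) f g -> 0 < t < 1 -> qa_gen (Ival a b) h ->
  (forall x : nat -> R, in_In (Ival a b) 2 x ->
        Bmean (Ival a b) f g 2 x (two_weights t) = Amean (Ival a b) h 2 x (two_weights t)) ->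
  forall u v, Jset (Ival a b) h u -> Jset (Ival a b) h v ->
  let X := inv_on (Ival a b) h in
  g (X (t * u + (1 - t) * v)) * (t * f (X u) + (1 - t) * f (X v)) =
  f (X (t * u + (1 - t) * v)) * (t * g (X u) + (1 - t) * g (X v)).
Proof.
  intros [Hf [Hsm Hcont]] Ht [Hhc Hhm] H u v Hu Hv X.
  set (I := Ival a b) in *.
  destruct (X_spec a b h u Hu) as [Iu Eu].
  destruct (X_spec a b h v Hv) as [Iv Ev].
  set (x2 := fun i : nat => match i with O => X u | _ => X v end).
  assert (Hx2 : in_In I 2 x2). { intros i Hi. destruct i; simpl; auto. }
  specialize (H x2 Hx2).
  unfold Bmean, Amean in H. simpl in H.
  change (h (X u) = u) in Eu. change (h (X v) = v) in Ev. change (I (X u)) in Iu. change (I (X v)) in Iv.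
  rewrite Eu, Ev in H.
  replace ((0 + t * u + (1 - t) * v) / (0 + t + (1 - t))) with (t * u + (1 - t) * v) in H by (field; lra).
  fold X in H.
  set (phi := fun y => g y / f y) in *.
  set (r := (0 + t * g (X u) + (1 - t) * g (X v)) / (0 + t * f (X u) + (1 - t) * f (X v))) in H.
  pose proof (Hf _ Iu) as Fu. pose proof (Hf _ Iv) as Fv.
  assert (Hex : exists z, I z /\ phi z = r).
  { set (L := fun i => two_weights t i * f (x2 i)).
    assert (HL : in_Lambda 2 L).
    { split. intros i Hi. unfold L, x2. destruct i as [|[|i]]; simpl; try lia.
      apply Rmult_le_pos; lra. apply Rmult_le_pos; lra.
      unfold L, x2; simpl. nra. }
    destruct (wavg_attained I phi 2 x2 L (Ival_convex a b) Hcont Hx2 HL) as [z [Iz Ez]].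
    exists z; split; auto. rewrite Ez. unfold L, r, phi, x2; simpl. field. repeat split; try lra; nra. }
  destruct (inv_on_spec I phi r Hex) as [Iw Ew].
  rewrite H in Iw, Ew.
  pose proof (Hf _ Iw) as Fw.
  unfold phi, r in Ew.
  assert (Hd : 0 < t * f (X u) + (1 - t) * f (X v)) by nra.
  apply (Rmult_eq_reg_r (/ f (X (t * u + (1 - t) * v)) * / (t * f (X u) + (1 - t) * f (X v)))).
  2: { apply Rmult_integral_contrapositive_currified; apply Rinv_neq_0_compat; lra. }
  transitivity (g (X (t * u + (1 - t) * v)) / f (X (t * u + (1 - t) * v))). field; lra.
  rewrite Ew. field. lra.
Qed.

Lemma pq_affine a b f g t h : B0 (Ival a b) f g -> 0 < t < 1 -> t <> 1 - t -> qa_gen (Ival a b) h ->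
  (forall x : nat -> R, in_In (Ival a b) 2 x ->
        Bmean (Ival a b) f g 2 x (two_weights t) = Amean (Ival a b) h 2 x (two_weights t)) ->
  forall u v, Jset (Ival a b) h u -> Jset (Ival a b) h v ->
  f (inv_on (Ival a b) h (t * u + (1 - t) * v)) = t * f (inv_on (Ival a b) h u) + (1 - t) * f (inv_on (Ival a b) h v) /\
  g (inv_on (Ival a b) h (t * u + (1 - t) * v)) = t * g (inv_on (Ival a b) h u) + (1 - t) * g (inv_on (Ival a b) h v).
Proof.
  intros HB Ht Hne Hqa H u v Hu Hv.
  pose proof HB as [Hf [Hsm Hcont]]. pose proof Hqa as [Hhc Hhm].
  set (I := Ival a b) in *. set (X := inv_on I h).
  destruct (Req_dec u v) as [E|E].
  { subst v. replace (t * u + (1 - t) * u) with u by ring. split; ring. }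
  pose proof (key_eq a b f g t h HB Ht Hqa H) as K. cbv zeta in K. fold I X in K.
  set (m := t * u + (1 - t) * v). set (m' := t * v + (1 - t) * u).
  set (w := t * m + (1 - t) * u). set (w' := t * m' + (1 - t) * v).
  assert (Ht' : 0 <= t <= 1) by lra.
  assert (Jm : Jset I h m) by (apply J_comb; auto).
  assert (Jm' : Jset I h m') by (apply J_comb; auto).
  assert (Jw : Jset I h w) by (apply J_comb; auto).
  assert (Jw' : Jset I h w') by (apply J_comb; auto).
  pose proof (K u v Hu Hv) as K1. fold m in K1.
  pose proof (K v u Hv Hu) as K2. fold m' in K2.
  pose proof (K m u Jm Hu) as K3a. fold w in K3a.
  pose proof (K u m' Hu Jm') as K3b.
  replace (t * u + (1 - t) * m') with w in K3b by (unfold w, m, m'; ring).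
  pose proof (K m' v Jm' Hv) as K4a. fold w' in K4a.
  pose proof (K v m Hv Jm) as K4b.
  replace (t * v + (1 - t) * m) with w' in K4b by (unfold w', m, m'; ring).
  assert (Pos : forall z, Jset I h z -> 0 < f (X z)).
  { intros z Hz. apply Hf. apply (X_spec a b h z Hz). }
  assert (HD : f (X u) * g (X v) - g (X u) * f (X v) <> 0).
  { intros D.
    assert (Euv : X u = X v).
    { apply (sm_inj I (fun y => g y / f y)); auto.
      apply (X_spec a b h u Hu). apply (X_spec a b h v Hv).
      pose proof (Pos u Hu); pose proof (Pos v Hv).
      cbv beta.
      replace (g (X u) / f (X u)) with ((g (X u) * f (X v)) / (f (X u) * f (X v))) by (field; lra).
      replace (g (X v) / f (X v)) with ((g (X v) * f (X u)) / (f (X u) * f (X v))) by (field; lra).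
      f_equal. nra. }
    apply E. destruct (X_spec a b h u Hu) as [_ Eu]. destruct (X_spec a b h v Hv) as [_ Ev].
    change (h (X u) = u) in Eu. change (h (X v) = v) in Ev. rewrite <- Eu, <- Ev, Euv. auto. }
  apply (kappa_alg t (1 - t) (f (X u)) (g (X u)) (f (X v)) (g (X v))
           (f (X m)) (g (X m)) (f (X m')) (g (X m')) (f (X w)) (g (X w)) (f (X w')) (g (X w')));
  auto; try lra.
  all: try (apply Pos; auto).
  all: try (apply Rgt_not_eq, Pos; auto).
Qed.

Lemma S5_S6 a b f g : Rbar_lt a b -> B0 (Ival a b) f g ->
  (exists t h, ((0 < t < 1/2) \/ (1/2 < t < 1)) /\ qa_gen (Ival a b) h /\
      forall x : nat -> R, in_In (Ival a b) 2 x ->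
        Bmean (Ival a b) f g 2 x (two_weights t) = Amean (Ival a b) h 2 x (two_weights t)) ->
  exists c d : R, forall x, Ival a b x -> c * f x + d * g x = 1.
Proof.
  intros Hab HB [t [h [Ht0 [Hqa H]]]].
  assert (Ht : 0 < t < 1) by lra. assert (Hne : t <> 1 - t) by lra.
  pose proof HB as [Hf [Hsm Hcont]]. pose proof Hqa as [Hhc Hhm].
  set (I := Ival a b) in *. set (X := inv_on I h). set (J := Jset I h).
  set (p := fun u => f (X u)). set (q := fun u => g (X u)).
  assert (Hp : tJ J p t).
  { intros u v Hu Hv. apply (pq_affine a b f g t h HB Ht Hne Hqa H u v Hu Hv). }
  assert (Hq : tJ J q t).
  { intros u v Hu Hv. apply (pq_affine a b f g t h HB Ht Hne Hqa H u v Hu Hv). }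
  assert (HJc : convex_set J) by (apply J_convex; auto).
  assert (XI : forall u, J u -> I (X u)) by (intros u Hu; apply (X_spec a b h u Hu)).
  assert (Pos : forall z, J z -> 0 < p z) by (intros z Hz; apply Hf, XI, Hz).
  set (psi := fun u => g (X u) / f (X u)).
  assert (Hpsi : strictly_monotone_on J psi).
  { apply (sm_comp J I X (fun y => g y / f y)); auto. apply X_sm; auto. }
  assert (Eq_psi : forall z, J z -> q z = p z * psi z).
  { intros z Hz. unfold q, p, psi. field. pose proof (Pos z Hz). unfold p in H0. lra. }
  destruct (Ival_nonempty a b Hab) as [x0 Hx0].
  set (u0 := h x0). assert (J0 : J u0) by (exists x0; auto).
  destruct (J_above a b h Hhm u0 J0) as [u1 [J1 H01]].
  set (D := p u0 * q u1 - q u0 * p u1).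
  assert (HD : D <> 0).
  { intros E0. unfold D in E0. rewrite !Eq_psi in E0 by auto.
    assert (E1 : p u0 * p u1 * (psi u1 - psi u0) = 0) by (rewrite <- E0; ring).
    pose proof (Pos u0 J0); pose proof (Pos u1 J1).
    destruct Hpsi as [Hm|Hm]; specialize (Hm u0 u1 J0 J1 H01);
    assert (0 < p u0 * p u1) by (apply Rmult_lt_0_compat; lra);
    apply Rmult_integral in E1; destruct E1; lra. }
  set (c := (q u1 - q u0) / D). set (d := (p u0 - p u1) / D).
  exists c, d. intros x Hx.
  set (u := h x). assert (Ju : J u) by (exists x; auto).
  assert (EX : X u = x) by (apply X_h; auto).
  set (r := fun z => c * p z + d * q z).
  assert (R0 : r u0 = 1) by (unfold r, c, d; field_simplify_eq; [unfold D; ring|auto]).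
  assert (R1 : r u1 = 1) by (unfold r, c, d; field_simplify_eq; [unfold D; ring|auto]).
  set (al := Rmin u0 u). set (be := Rmax u1 u).
  assert (Jal : J al) by (unfold al, Rmin; destruct Rle_dec; auto).
  assert (Jbe : J be) by (unfold be, Rmax; destruct Rle_dec; auto).
  assert (Hal0 : al <= u0) by apply Rmin_l. assert (Halu : al <= u) by apply Rmin_r.
  assert (Hbe1 : u1 <= be) by apply Rmax_l. assert (Hbeu : u <= be) by apply Rmax_r.
  assert (Hab' : al < be) by lra.
  destruct (J_below a b h Hhm al Jal) as [c0 [Jc0 Hc0]].
  set (K := Rabs (psi c0) + Rabs (psi be) + 1).
  set (Q2 := fun w => q w + K * p w).
  assert (HQ2 : tJ J Q2 t).
  { intros v1 v2 Hv1 Hv2. unfold Q2. rewrite Hp, Hq by auto. ring. }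
  assert (PQ2 : forall w, c0 <= w <= be -> 0 < Q2 w).
  { intros w Hw. assert (Jw : J w) by (apply (HJc c0 be w); auto).
    pose proof (sm_between J psi c0 w be Jc0 Jw Jbe Hw Hpsi).
    pose proof (Rle_abs (- psi w)). rewrite Rabs_Ropp in *.
    unfold Q2. rewrite Eq_psi by auto. pose proof (Pos w Jw).
    assert (0 < psi w + K) by (unfold K; lra). nra. }
  assert (AffP := tJ_affine J p t al be c0 HJc Ht Hp Jal Jbe Jc0 Hab' Hc0
                   (fun w Hw => Pos w (HJc c0 be w Jc0 Jbe Hw))).
  assert (AffQ2 := tJ_affine J Q2 t al be c0 HJc Ht HQ2 Jal Jbe Jc0 Hab' Hc0 PQ2).
  assert (AR : forall z, al <= z <= be -> r z * (be - al) = r al * (be - z) + r be * (z - al)).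
  { intros z Hz. pose proof (AffP z Hz) as E1. pose proof (AffQ2 z Hz) as E2. unfold Q2 in E2.
    assert (E3 : q z * (be - al) = q al * (be - z) + q be * (z - al)).
    { transitivity ((q z + K * p z) * (be - al) - K * (p z * (be - al))). ring.
      rewrite E1, E2. ring. }
    unfold r. transitivity (c * (p z * (be - al)) + d * (q z * (be - al))). ring.
    rewrite E1, E3. ring. }
  pose proof (AR u0 ltac:(lra)) as A0. pose proof (AR u1 ltac:(lra)) as A1.
  pose proof (AR u ltac:(lra)) as Au.
  rewrite R0 in A0. rewrite R1 in A1.
  assert (EAB : (r al - r be) * (u1 - u0) = 0).
  { transitivity ((r al * (be - u0) + r be * (u0 - al)) - (r al * (be - u1) + r be * (u1 - al))). ring.
    rewrite <- A0, <- A1. ring. }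
  apply Rmult_integral in EAB. destruct EAB as [EAB|EAB]; [|lra].
  assert (Ea : r al = 1).
  { apply (Rmult_eq_reg_r (be - al)); [|lra].
    transitivity (r al * (be - u0) + r be * (u0 - al)). replace (r be) with (r al) by lra. ring.
    rewrite <- A0. ring. }
  assert (Eb : r be = 1) by lra.
  rewrite Ea, Eb in Au.
  assert (Ru : r u = 1).
  { apply (Rmult_eq_reg_r (be - al)); [|lra]. rewrite Au. ring. }
  unfold r, p, q in Ru. rewrite EX in Ru. exact Ru.
Qed.

Lemma derA (f g : R -> R) y : ex_derive f y -> ex_derive g y -> ex_derive (Derive f) y -> ex_derive (Derive g) y ->
  Derive f y * g y - f y * Derive g y <> 0 ->
  Derive (Derive f) y * Derive g y - Derive f y * Derive (Derive g) y = 0 ->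
  is_derive (fun z => - Derive g z / (Derive f z * g z - f z * Derive g z)) y 0.
Proof.
  intros Hf Hg Hf' Hg' HW H21. auto_derive.
  - repeat split; auto.
  - change (Derive (fun x : R => Derive g x) y) with (Derive (Derive g) y).
    change (Derive (fun x : R => Derive f x) y) with (Derive (Derive f) y).
    change (Derive (fun x : R => g x) y) with (Derive g y).
    change (Derive (fun x : R => f x) y) with (Derive f y).
    set (F1 := Derive f y) in *. set (G1 := Derive g y) in *.
    set (F2 := Derive (Derive f) y) in *. set (G2 := Derive (Derive g) y) in *.
    set (W := F1 * g y - f y * G1) in *.
    transitivity (g y * (F2 * G1 - F1 * G2) / (W * W)).
    + unfold W. field. exact HW.
    + rewrite H21. unfold Rdiv. ring.
Qed.

Lemma derB (f g : R -> R) y : ex_derive f y -> ex_derive g y -> ex_derive (Derive f) y -> ex_derive (Derive g) y ->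
  Derive f y * g y - f y * Derive g y <> 0 ->
  Derive (Derive f) y * Derive g y - Derive f y * Derive (Derive g) y = 0 ->
  is_derive (fun z => Derive f z / (Derive f z * g z - f z * Derive g z)) y 0.
Proof.
  intros Hf Hg Hf' Hg' HW H21. auto_derive.
  - repeat split; auto.
  - change (Derive (fun x : R => Derive g x) y) with (Derive (Derive g) y).
    change (Derive (fun x : R => Derive f x) y) with (Derive (Derive f) y).
    change (Derive (fun x : R => g x) y) with (Derive g y).
    change (Derive (fun x : R => f x) y) with (Derive f y).
    set (F1 := Derive f y) in *. set (G1 := Derive g y) in *.
    set (F2 := Derive (Derive f) y) in *. set (G2 := Derive (Derive g) y) in *.
    set (W := F1 * g y - f y * G1) in *.
    transitivity (- f y * (F2 * G1 - F1 * G2) / (W * W)).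
    + unfold W. field. exact HW.
    + rewrite H21. unfold Rdiv. ring.
Qed.

Lemma const_on_I a b (A : R -> R) : (forall y, Ival a b y -> is_derive A y 0) ->
  forall x y, Ival a b x -> Ival a b y -> A x = A y.
Proof.
  intros H x y Hx Hy.
  destruct (Rtotal_order x y) as [L|[L|L]].
  - apply eq_is_derive; auto. intros t Ht. apply H. apply (Ival_conv a b x y t); auto.
  - subst; auto.
  - symmetry. apply eq_is_derive; auto. intros t Ht. apply H. apply (Ival_conv a b y x t); auto.
Qed.

Lemma W10_nz a b f g y : B2 (Ival a b) f g -> Ival a b y ->
  Derive f y * g y - f y * Derive g y <> 0.
Proof.
  intros [Hf [Cf [Cg Hd]]] Hy E.
  destruct (Cf y Hy) as [Df _]. destruct (Cg y Hy) as [Dg _].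
  apply (Hd y Hy). rewrite Derive_div; auto.
  2: { specialize (Hf y Hy); lra. }
  replace (Derive g y * f y - g y * Derive f y) with (- (Derive f y * g y - f y * Derive g y)) by ring.
  rewrite E. unfold Rdiv. ring.
Qed.

Lemma S7_S6 a b f g : Rbar_lt a b -> B2 (Ival a b) f g -> (forall x, Ival a b x -> Psi f g x = 0) ->
  exists c d : R, forall x, Ival a b x -> c * f x + d * g x = 1.
Proof.
  intros Hab HB HP.
  pose proof HB as [Hf [Cf [Cg Hd]]].
  assert (H21 : forall y, Ival a b y ->
    Derive (Derive f) y * Derive g y - Derive f y * Derive (Derive g) y = 0).
  { intros y Hy. specialize (HP y Hy). unfold Psi, Wr in HP.
    change (Derive_n f 2 y) with (Derive (Derive f) y) in HP.
    change (Derive_n g 2 y) with (Derive (Derive g) y) in HP.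
    change (Derive_n f 1 y) with (Derive f y) in HP.
    change (Derive_n g 1 y) with (Derive g y) in HP.
    change (Derive_n f 0 y) with (f y) in HP.
    change (Derive_n g 0 y) with (g y) in HP.
    pose proof (W10_nz a b f g y HB Hy) as HW.
    unfold Rdiv in HP. apply Rmult_integral in HP. destruct HP as [HP|HP].
    - lra.
    - exfalso. apply (Rinv_neq_0_compat _ HW HP). }
  set (A := fun z => - Derive g z / (Derive f z * g z - f z * Derive g z)).
  set (B := fun z => Derive f z / (Derive f z * g z - f z * Derive g z)).
  assert (HA : forall y, Ival a b y -> is_derive A y 0).
  { intros y Hy. destruct (Cf y Hy) as [D1 [D2 _]]. destruct (Cg y Hy) as [E1 [E2 _]].
    apply derA; auto. apply (W10_nz a b f g y HB Hy). }
  assert (HB' : forall y, Ival a b y -> is_derive B y 0).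
  { intros y Hy. destruct (Cf y Hy) as [D1 [D2 _]]. destruct (Cg y Hy) as [E1 [E2 _]].
    apply derB; auto. apply (W10_nz a b f g y HB Hy). }
  destruct (Ival_nonempty a b Hab) as [x0 Hx0].
  exists (A x0), (B x0). intros x Hx.
  rewrite (const_on_I a b A HA x0 x Hx0 Hx), (const_on_I a b B HB' x0 x Hx0 Hx).
  unfold A, B. field. apply (W10_nz a b f g x HB Hx).
Qed.

Lemma deriv_const_comb (F G : R -> R) c d k y :
  locally y (fun z => c * F z + d * G z = k) -> ex_derive F y -> ex_derive G y ->
  c * Derive F y + d * Derive G y = 0.
Proof.
  intros Hl HF HG.
  assert (H1 : is_derive (fun z => c * F z + d * G z) y (c * Derive F y + d * Derive G y)).
  { auto_derive. split; auto. change (Derive (fun x : R => F x) y) with (Derive F y). change (Derive (fun x : R => G x) y) with (Derive G y). ring. }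
  assert (H2 : is_derive (fun _ : R => k) y (c * Derive F y + d * Derive G y)).
  { apply (is_derive_ext_loc (fun z => c * F z + d * G z)); auto. }
  assert (H3 : is_derive (fun _ : R => k) y 0) by (apply (is_derive_const (V := R_NormedModule) k y)).
  apply is_derive_unique in H2. apply is_derive_unique in H3. congruence.
Qed.

Lemma S6_S7 a b f g : B2 (Ival a b) f g ->
  (exists c d : R, forall x, Ival a b x -> c * f x + d * g x = 1) ->
  forall x, Ival a b x -> Psi f g x = 0.
Proof.
  intros HB [c [d Hcd]] x Hx.
  pose proof HB as [Hf [Cf [Cg Hd]]].
  assert (D1 : forall y, Ival a b y -> c * Derive f y + d * Derive g y = 0).
  { intros y Hy. destruct (Cf y Hy) as [Ef _]. destruct (Cg y Hy) as [Eg _].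
    apply (deriv_const_comb f g c d 1 y); auto.
    apply (filter_imp (Ival a b)); auto. apply Ival_locally; auto. }
  assert (D2 : c * Derive (Derive f) x + d * Derive (Derive g) x = 0).
  { destruct (Cf x Hx) as [_ [Ef _]]. destruct (Cg x Hx) as [_ [Eg _]].
    apply (deriv_const_comb (Derive f) (Derive g) c d 0 x); auto.
    apply (filter_imp (Ival a b)); auto. apply Ival_locally; auto. }
  pose proof (D1 x Hx) as D1x. pose proof (Hcd x Hx) as Hx1.
  unfold Psi, Wr.
  change (Derive_n f 2 x) with (Derive (Derive f) x).
  change (Derive_n g 2 x) with (Derive (Derive g) x).
  change (Derive_n f 1 x) with (Derive f x).
  change (Derive_n g 1 x) with (Derive g x).
  set (F1 := Derive f x) in *. set (G1 := Derive g x) in *.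
  set (F2 := Derive (Derive f) x) in *. set (G2 := Derive (Derive g) x) in *.
  assert (EC : c * (F2 * G1 - F1 * G2) = 0).
  { transitivity ((c * F2 + d * G2) * G1 - (c * F1 + d * G1) * G2). ring. rewrite D1x, D2. ring. }
  assert (ED : d * (F2 * G1 - F1 * G2) = 0).
  { transitivity (- ((c * F2 + d * G2) * F1 - (c * F1 + d * G1) * F2)). ring. rewrite D1x, D2. ring. }
  assert (EW : F2 * G1 - F1 * G2 = 0).
  { destruct (Req_dec c 0) as [Hc|Hc].
    - subst c. assert (d <> 0) by (intros E; subst d; lra).
      apply Rmult_integral in ED; destruct ED; [contradiction|auto].
    - apply Rmult_integral in EC; destruct EC; [contradiction|auto]. }
  rewrite EW. unfold Rdiv. ring.
Qed.

Theorem theorem3p4 (a b : Rbar) (f g : R -> R) :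
  Rbar_lt a b -> B0 (Ival a b) f g ->
  let I := Ival a b in
  let S1 := exists h, qa_gen I h /\
      forall (n : nat) (x l : nat -> R), (1 <= n)%nat -> in_In I n x -> in_Lambda n l ->
        Bmean I f g n x l = Amean I h n x l in
  let S2 := exists h, qa_gen I h /\
      forall (n : nat) (x : nat -> R), (1 <= n)%nat -> in_In I n x ->
        Bmean I f g n x ones = Amean I h n x ones in
  let S3 := exists h (n : nat), qa_gen I h /\ (3 <= n)%nat /\
      forall x : nat -> R, in_In I n x -> Bmean I f g n x ones = Amean I h n x ones in
  let S4 := exists h, qa_gen I h /\
      forall x l : nat -> R, in_In I 2 x -> in_Lambda 2 l ->
        Bmean I f g 2 x l = Amean I h 2 x l in
  let S5 := exists t h, ((0 < t < 1/2) \/ (1/2 < t < 1)) /\ qa_gen I h /\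
      forall x : nat -> R, in_In I 2 x ->
        Bmean I f g 2 x (two_weights t) = Amean I h 2 x (two_weights t) in
  let S6 := exists c d : R, forall x, I x -> c * f x + d * g x = 1 in
  let S7 := forall x, I x -> Psi f g x = 0 in
  (S1 <-> S2) /\ (S2 <-> S3) /\ (S3 <-> S4) /\ (S4 <-> S5) /\ (S5 <-> S6) /\
  (B2 I f g -> (S6 <-> S7)).
Proof.
  intros Hab HB. cbv zeta.
  pose proof HB as [Hf _].
  assert (H61 := S6_S1 (Ival a b) f g (Ival_convex a b) HB).
  assert (H56 := S5_S6 a b f g Hab HB).
  assert (H12 := S1_S2 (Ival a b) f g).
  assert (H23 := S2_S3 (Ival a b) f g).
  assert (H35 := S3_S5 (Ival a b) f g Hf).
  assert (H14 := S1_S4 (Ival a b) f g).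
  assert (H45 := S4_S5 (Ival a b) f g).
  split; [split|split; [split|split; [split|split; [split|split; [split|]]]]].
  - exact H12.
  - intros H. exact (H61 (H56 (H35 (H23 H)))).
  - exact H23.
  - intros H. exact (H12 (H61 (H56 (H35 H)))).
  - intros H. exact (H14 (H61 (H56 (H35 H)))).
  - intros H. exact (H23 (H12 (H61 (H56 (H45 H))))).
  - exact H45.
  - intros H. exact (H14 (H61 (H56 H))).
  - exact H56.
  - intros H. exact (H45 (H14 (H61 H))).
  - intros HB2. split.
    + intros H6. apply (S6_S7 a b f g HB2 H6).
    + intros H7. apply (S7_S6 a b f g Hab HB2 H7).
Qed.
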